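(* Let $G$ be a gap-free finite simple graph, $s\geq1$, $e_1,\dots,e_s$ edges of $G$ (repetitions allowed), and $G'$ the graph associated to $(I(G)^{s+1}:e_1\cdots e_s)^{\mathrm{pol}}$. Let $Y=\{y_1,\dots,y_l\}$ be a set of vertices of $G'$, and suppose $u,v\notin Y$ are vertices of $G$ that are even-connected with respect to $e_1\cdots e_s$ via $u=p_0,\dots,p_{2k+1}=v$, such that for every even-connection $u''=p'_0,\dots,p'_{2k'+1}=v''$ with respect to $e_1\cdots e_s$ with $u'',v''\notin Y$ one has $k'\leq k$. Let $H=G'-Y$ and let $\operatorname{st}_H u$ be the set consisting of $u$ and its neighbors in $H$. Then $H-\operatorname{st}_H u$ is the disjoint union of a graph $G''$ obtained from $G$ by deleting vertices (an induced subgraph of $G$) and a set of isolated vertices, each of which is one of the new (polarization) vertices $x'$ of $G'$.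
   Context: $S=K[x_1,\dots,x_n]$ with the $x_i$ the vertices of $G$; $I(G)=(xy: xy\text{ an edge})$; edges identified with monomials; $(J:m)=\{f: fm\in J\}$; $J=(I(G)^{s+1}:e_1\cdots e_s)$ is generated by quadratic monomials. $J^{\mathrm{pol}}$ is generated by $x_ix_j$ ($i\ne j$) with $x_ix_j\in J$ and $x_kx_k'$ with $x_k^2\in J$; $G'$ has vertex set $V(G)\cup\{x_k': x_k^2\in J\}$ and edges $\{x_ix_j: i\ne j, x_ix_j\in J\}\cup\{x_kx_k': x_k^2\in J\}$. For a vertex set $W$, $H-W$ is the induced subgraph on the remaining vertices. Even-connection between $u,v$ (possibly equal) with respect to $e_1,\dots,e_s$: a sequence $p_0,\dots,p_{2k+1}$, $k\ge1$ (repeats allowed), with $p_0=u$, $p_{2k+1}=v$; each $p_{2l+1}p_{2l+2}$ ($0\le l\le k-1$) equal to some $e_i$; for every $i$, $|\{l: p_{2l+1}p_{2l+2}=e_i\}|\le|\{j: e_j=e_i\}|$; and each $p_rp_{r+1}$ ($0\le r\le2k$) an edge of $G$. Gap-free: no two vertex-disjoint edges $uv$, $xy$ with no edge between $\{u,v\}$ and $\{x,y\}$. *)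

(* Defs.v *)
(* finite simple graphs as symmetric irreflexive relations. *)
From mathcomp Require Import all_boot.
Set Implicit Arguments. Unset Strict Implicit. Unset Printing Implicit Defensive.

Section Defs.
Variable V : finType.

(* Monomials in the variables x_v (v : V) are exponent vectors V -> nat. *)
Definition mprod (s : seq (V * V)) : V -> nat :=
  fun z => \sum_(q <- s) ((z == q.1) + (z == q.2)).

Definition quad (a b : V) : V -> nat := fun z => (z == a) + (z == b).

Definition mdivides (m1 m2 : V -> nat) : Prop := forall z, m1 z <= m2 z.

(* A monomial m lies in the monomial ideal I(G)^t iff it is divisible by a
   product of t edges of G (generators of I(G)^t). *)
Definition in_edge_ideal_pow (e : rel V) (t : nat) (m : V -> nat) : Prop :=
  exists fs : seq (V * V),
    [/\ size fs = t, all (fun q => e q.1 q.2) fs & mdivides (mprod fs) m].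

(* x_a x_b \in J := (I(G)^(s+1) : e_1 ... e_s), where es = [e_1;...;e_s]. *)
Definition in_J (e : rel V) (es : seq (V * V)) (a b : V) : Prop :=
  in_edge_ideal_pow e (size es).+1 (fun z => quad a b z + mprod es z).

(* The graph G' of J^pol: vertices inl x (old vertex x of G) and inr x
   (new vertex x'), the latter present iff x^2 \in J. *)
Definition Gp_vert (e : rel V) (es : seq (V * V)) (w : V + V) : Prop :=
  match w with
  | inl _ => True
  | inr x => in_J e es x x
  end.

Definition Gp_edge (e : rel V) (es : seq (V * V)) (w1 w2 : V + V) : Prop :=
  match w1, w2 with
  | inl x, inl y => x <> y /\ in_J e es x y
  | inl x, inr y => x = y /\ in_J e es x x
  | inr x, inl y => x = y /\ in_J e es x x
  | inr _, inr _ => False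
  end.

Definition same_edge (q r : V * V) : bool :=
  ((q.1 == r.1) && (q.2 == r.2)) || ((q.1 == r.2) && (q.2 == r.1)).

Definition even_conn (e : rel V) (es : seq (V * V)) (u v : V) (k : nat)
    (p : seq V) : Prop :=
  [/\ 1 <= k, size p = (2 * k + 2)%N, nth u p 0 = u & nth u p (2 * k + 1) = v] /\
  [/\ (forall l, l < k -> (exists2 i, i < size es &
          same_edge (nth u p (2 * l + 1), nth u p (2 * l + 2)) (nth (u, u) es i))),
      (forall i, i < size es ->
          count (fun l => same_edge (nth u p (2 * l + 1), nth u p (2 * l + 2))
                                    (nth (u, u) es i)) (iota 0 k)
          <= count (same_edge (nth (u, u) es i)) es)
    & (forall r, r < 2 * k + 1 -> e (nth u p r) (nth u p r.+1))].

Definition gap_free (e : rel V) : Prop :=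
  forall a b x y, e a b -> e x y ->
    a != x -> a != y -> b != x -> b != y ->
    [|| e a x, e a y, e b x | e b y].

Definition H_vert (e : rel V) (es : seq (V * V)) (Y : {set V + V}) (w : V + V)
  : Prop := Gp_vert e es w /\ w \notin Y.

Definition star_H (e : rel V) (es : seq (V * V)) (Y : {set V + V}) (u : V)
    (w : V + V) : Prop :=
  w = inl u \/ (H_vert e es Y w /\ Gp_edge e es (inl u) w).

End Defs.

(* Main.v *)
Require Import Defs.
From mathcomp Require Import all_boot zify.
Set Implicit Arguments. Unset Strict Implicit. Unset Printing Implicit Defensive.

Lemma se_refl (V : finType) (q : V * V) : same_edge q q.
Proof. by rewrite /same_edge !eqxx. Qed.

Lemma se_sym (V : finType) (q r : V * V) : same_edge q r = same_edge r q.
Proof.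
case: q r => a b [c d]; rewrite /same_edge /=.
by rewrite (eq_sym c a) (eq_sym d b) (eq_sym c b) (eq_sym d a) [(b == c) && _]andbC.
Qed.

Lemma se_trans (V : finType) (q r t : V * V) :
  same_edge q r -> same_edge r t -> same_edge q t.
Proof.
case: q => a b; case: r => c d; case: t => f g; rewrite /same_edge /=.
by case/orP=> /andP[/eqP-> /eqP->]; case/orP=> /andP[/eqP-> /eqP->];
  rewrite !eqxx ?orbT.
Qed.

Lemma se_count (V : finType) (q r : V * V) (l : seq (V * V)) :
  same_edge q r -> count (same_edge q) l = count (same_edge r) l.
Proof.
move=> h; apply: eq_count => z; apply/idP/idP => hz.
- by apply: se_trans hz; rewrite se_sym.
- exact: se_trans hz.
Qed.

Lemma se_quad (V : finType) (q r : V * V) z :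
  same_edge q r -> quad q.1 q.2 z = quad r.1 r.2 z.
Proof.
case: q r => a b [c d]; rewrite /same_edge /quad /=.
by case/orP=> /andP[/eqP-> /eqP->] //; rewrite addnC.
Qed.

Fixpoint chain (V : finType) (e : rel V) (a : V) (bl : seq (V * V)) (b : V)
  : bool :=
  match bl with
  | [::] => e a b
  | c :: bl' => e a c.1 && chain e c.2 bl' b
  end.

Lemma chain_cat (V : finType) (e : rel V) a l1 (c : V * V) l2 b :
  chain e a (l1 ++ c :: l2) b = chain e a l1 c.1 && chain e c.2 l2 b.
Proof. by elim: l1 a => [|d l1 IH] a //=; rewrite IH andbA. Qed.

Definition revb (V : finType) (l : seq (V * V)) :=
  rev (map (fun c => (c.2, c.1)) l).

Lemma chain_rev (V : finType) (e : rel V) a l b :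
  symmetric e -> chain e a l b -> chain e b (revb l) a.
Proof.
move=> sym; elim: l a => [|[c d] l IH] a /=; first by rewrite sym.
case/andP=> h1 h2; rewrite /revb /= rev_cons -cats1.
by rewrite chain_cat /= (IH _ h2) /= sym.
Qed.

Lemma count_revb (V : finType) (q : V * V) l :
  count (same_edge q) (revb l) = count (same_edge q) l.
Proof.
rewrite /revb count_rev count_map; apply: eq_count => [[c d]] /=.
by rewrite /same_edge /= orbC.
Qed.

Definition fits (V : finType) (es bl : seq (V * V)) :=
  forall q, count (same_edge q) bl <= count (same_edge q) es.

Lemma mprod_cons (V : finType) (q : V * V) s z :
  mprod (q :: s) z = quad q.1 q.2 z + mprod s z.
Proof. by rewrite /mprod big_cons. Qed.

Lemma mprod_perm (V : finType) (s1 s2 : seq (V * V)) z :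
  perm_eq s1 s2 -> mprod s1 z = mprod s2 z.
Proof. by move=> h; rewrite /mprod (perm_big _ h). Qed.

Lemma fits_cons_rem (V : finType) (es bl : seq (V * V)) (c g : V * V) :
  g \in es -> same_edge c g -> fits es (c :: bl) -> fits (rem g es) bl.
Proof.
move=> gin sc h q; move: (h q); rewrite (permP (perm_to_rem gin)) /=.
have -> : same_edge q c = same_edge q g.
  apply/idP/idP => hq; first exact: se_trans sc.
  by apply: se_trans hq _; rewrite se_sym.
lia.
Qed.

Lemma constr (V : finType) (e : rel V) (bl es : seq (V * V)) a b :
  symmetric e -> all (fun q => e q.1 q.2) es -> chain e a bl b -> fits es bl ->
  exists fs, [/\ size fs = (size es).+1, all (fun q => e q.1 q.2) fs &
    forall z, mprod fs z = quad a b z + mprod es z].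
Proof.
move=> sym; elim: bl es a => [|[c d] bl IH] es a ees /=.
  move=> hab _; exists ((a, b) :: es); split => //=; first by rewrite hab.
  by move=> z; rewrite mprod_cons.
case/andP=> hac hch hf.
have : 0 < count (same_edge (c, d)) es.
  by apply: leq_trans (hf (c, d)); rewrite /= se_refl.
rewrite -has_count => /hasP [g gin sg].
have fr := fits_cons_rem gin sg hf.
have er : all (fun q => e q.1 q.2) (rem g es).
  by apply/allP => q /mem_rem qin; move/allP: ees; apply.
have [fs' [s1 a1 m1]] := IH _ _ er hch fr.
exists ((a, c) :: fs'); split => /=.
- by rewrite s1 size_rem // prednK //; case: (es) gin.
- by rewrite hac.
- move=> z; rewrite mprod_cons m1 (mprod_perm _ (perm_to_rem gin)) mprod_cons.
  rewrite -(se_quad z sg) /quad /=; lia.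
Qed.

Lemma in_J_of_chain (V : finType) (e : rel V) (es bl : seq (V * V)) a b :
  symmetric e -> all (fun q => e q.1 q.2) es -> chain e a bl b -> fits es bl ->
  in_J e es a b.
Proof.
move=> sym ees hc hf; have [fs [s1 a1 m1]] := constr sym ees hc hf.
by exists fs; split => // z; rewrite m1.
Qed.

Lemma sum_eq1 (V : finType) (a : V) : \sum_(z : V) (z == a : nat) = 1.
Proof.
rewrite (bigD1 a) //= eqxx big1 // => z /negbTE ->; done.
Qed.

Lemma sum_quad (V : finType) (a b : V) : \sum_(z : V) quad a b z = 2.
Proof. by rewrite /quad big_split /= !sum_eq1. Qed.

Lemma sum_mprod (V : finType) (s : seq (V * V)) :
  \sum_(z : V) mprod s z = 2 * size s.
Proof.
elim: s => [|q s IH] /=.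
  by rewrite big1 // => z _; rewrite /mprod big_nil.
under eq_bigr => z _ do rewrite mprod_cons.
by rewrite big_split /= sum_quad IH; lia.
Qed.

Lemma eq_of_le_sum (V : finType) (f g : V -> nat) :
  (forall z, f z <= g z) -> \sum_z f z = \sum_z g z -> forall z, f z = g z.
Proof.
move=> le eqs z; apply/eqP; rewrite eqn_leq le /= leqNgt; apply/negP => lt.
have : \sum_z f z < \sum_z g z.
  rewrite (bigD1 z) //= [X in _ < X](bigD1 z) //=.
  have : \sum_(i | i != z) f i <= \sum_(i | i != z) g i by apply: leq_sum => i _.
  lia.
by rewrite eqs ltnn.
Qed.

Lemma mprod_pos (V : finType) (s : seq (V * V)) z :
  0 < mprod s z -> exists2 q, q \in s & (z == q.1) || (z == q.2).
Proof.
elim: s => [|q s IH]; first by rewrite /mprod big_nil.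
rewrite mprod_cons /quad.
case h : ((z == q.1) || (z == q.2)).
  by move=> _; exists q => //; rewrite mem_head.
move: h => /norP [/negbTE -> /negbTE ->] /= /IH [r rin hr].
by exists r => //; rewrite in_cons rin orbT.
Qed.

Definition other (V : finType) (g : V * V) (c : V) := if c == g.1 then g.2 else g.1.

Lemma other_se (V : finType) (g : V * V) c :
  (c == g.1) || (c == g.2) -> same_edge (c, other g c) g.
Proof.
rewrite /other /same_edge /=; case: ifP => [/eqP -> _|h1 /= h2].
  by rewrite !eqxx.
by rewrite h2 eqxx.
Qed.

Lemma peel (V : finType) (e : rel V) (fs : seq (V * V)) a :
  symmetric e -> all (fun q => e q.1 q.2) fs -> 0 < mprod fs a ->
  exists2 f, f \in fs & exists2 c, e a c &
    forall z, mprod fs z = quad a c z + mprod (rem f fs) z.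
Proof.
move=> sym efs; case/mprod_pos => f fin hf.
have sf := other_se hf.
exists f => //; exists (other f a).
  have := allP efs f fin.
  by case/orP: (sf) => /= /andP[/eqP <- /eqP <-] //; rewrite sym.
move=> z; rewrite (mprod_perm _ (perm_to_rem fin)) mprod_cons.
by rewrite -(se_quad z sf).
Qed.

Lemma extract (V : finType) (e : rel V) n (es fs : seq (V * V)) a b :
  symmetric e -> size es = n -> size fs = n.+1 -> all (fun q => e q.1 q.2) fs ->
  (forall z, mprod fs z = quad a b z + mprod es z) ->
  exists bl, chain e a bl b /\ fits es bl.
Proof.
move=> sym; elim: n es fs a => [|n IH] es fs a hes hfs efs hm.
  have := peel sym efs (_ : 0 < mprod fs a).
  case=> [|f fin [c eac hmf]]; first by rewrite hm /quad eqxx.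
  case: (eqVneq c b) => [cb | cb].
    by exists [::]; split; [rewrite /= -cb | move=> q /=].
  have := hm c; rewrite hmf /quad eqxx (negbTE cb) (size0nil hes) /mprod big_nil.
  lia.
have := peel sym efs (_ : 0 < mprod fs a).
case=> [|f fin [c eac hmf]]; first by rewrite hm /quad eqxx.
case: (eqVneq c b) => [cb | cb].
  by exists [::]; split; [rewrite /= -cb | move=> q /=].
have : 0 < mprod es c.
  by have := hm c; rewrite hmf /quad eqxx (negbTE cb); lia.
case/mprod_pos => g gin hg.
set d := other g c.
have sg := other_se hg.
have hm2 : forall z, mprod (rem f fs) z = quad d b z + mprod (rem g es) z.
  move=> z; move: (hm z); rewrite hmf (mprod_perm _ (perm_to_rem gin)) mprod_cons
    -(se_quad z sg) /quad /d /=; lia.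
have [|||bl' [hc hfit]] := IH (rem g es) (rem f fs) d _ _ _ hm2.
- by rewrite size_rem // hes.
- by rewrite size_rem // hfs.
- by apply/allP => q /mem_rem qin; move/allP: efs; apply.
exists ((c, d) :: bl'); split; first by rewrite /= eac hc.
move=> q; rewrite (permP (perm_to_rem gin)) /=.
have -> : same_edge q (c, d) = same_edge q g.
  apply/idP/idP => hq; first exact: se_trans sg.
  by apply: se_trans hq _; rewrite se_sym.
move: (hfit q); lia.
Qed.

Lemma chain_of_in_J (V : finType) (e : rel V) (es : seq (V * V)) a b :
  symmetric e -> in_J e es a b -> exists bl, chain e a bl b /\ fits es bl.
Proof.
move=> sym [fs [s1 a1 d1]].
have eqm := eq_of_le_sum d1.
have := eqm _; rewrite sum_mprod big_split /= sum_quad sum_mprod s1 => /(_ _)-eq2.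
apply: (extract sym (erefl (size es)) s1 a1) => z.
by rewrite eq2 //; lia.
Qed.

Fixpoint pseq (V : finType) (a : V) (bl : seq (V * V)) (b : V) : seq V :=
  match bl with
  | [::] => [:: a; b]
  | c :: bl' => a :: c.1 :: pseq c.2 bl' b
  end.

Lemma size_pseq (V : finType) (a : V) bl b : size (pseq a bl b) = 2 * size bl + 2.
Proof. by elim: bl a => [|c bl IH] a //=; rewrite IH; lia. Qed.

Lemma nth_pseq0 (V : finType) (z a : V) bl b : nth z (pseq a bl b) 0 = a.
Proof. by case: bl. Qed.

Lemma nth_pseq_last (V : finType) (z a : V) bl b :
  nth z (pseq a bl b) (2 * size bl + 1) = b.
Proof.
elim: bl a => [|c bl IH] a; first by [].
rewrite (_ : 2 * size (c :: bl) + 1 = (2 * size bl + 1).+2); last by rewrite [size _]/=; lia.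
exact: IH.
Qed.

Lemma nth_pseq_odd (V : finType) (z a : V) (d : V * V) bl b l :
  l < size bl -> nth z (pseq a bl b) (2 * l + 1) = (nth d bl l).1 /\
                 nth z (pseq a bl b) (2 * l + 2) = (nth d bl l).2.
Proof.
elim: bl a l => [|c bl IH] a l //.
case: l => [|l] hl; first by rewrite /= nth_pseq0.
rewrite (_ : 2 * l.+1 + 1 = (2 * l + 1).+2); last by lia.
rewrite (_ : 2 * l.+1 + 2 = (2 * l + 2).+2); last by lia.
exact: IH.
Qed.

Lemma pseq_edges (V : finType) (e : rel V) (z a : V) bl b :
  chain e a bl b -> all (fun q => e q.1 q.2) bl ->
  forall r, r < 2 * size bl + 1 -> e (nth z (pseq a bl b) r) (nth z (pseq a bl b) r.+1).
Proof.
elim: bl a => [|c bl IH] a /=.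
  by move=> hab _ [|r] //.
case/andP=> h1 h2 /andP[h3 h4] [|[|r]] hr /=.
- by [].
- by rewrite nth_pseq0.
- by apply: IH => //; lia.
Qed.

Lemma fits_edges (V : finType) (e : rel V) (es bl : seq (V * V)) :
  symmetric e -> all (fun q => e q.1 q.2) es -> fits es bl ->
  all (fun q => e q.1 q.2) bl.
Proof.
move=> sym ees hf; apply/allP => q qin.
have : 0 < count (same_edge q) es.
  apply: leq_trans (hf q); rewrite -has_count; apply/hasP; exists q => //.
  exact: se_refl.
rewrite -has_count => /hasP [g gin sg].
have := allP ees g gin; case: q sg {qin} => c d; rewrite /same_edge /=.
by case/orP=> /andP[/eqP -> /eqP ->] //; rewrite sym.
Qed.

Lemma even_of_chain (V : finType) (e : rel V) (es bl : seq (V * V)) a b :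
  symmetric e -> all (fun q => e q.1 q.2) es -> 0 < size bl ->
  chain e a bl b -> fits es bl -> even_conn e es a b (size bl) (pseq a bl b).
Proof.
move=> sym ees hs hc hf.
have eb := fits_edges sym ees hf.
have pairE : forall l, l < size bl ->
    (nth a (pseq a bl b) (2 * l + 1), nth a (pseq a bl b) (2 * l + 2)) = nth (a, a) bl l.
  move=> l hl; have [-> ->] := nth_pseq_odd a a (a, a) b hl.
  by case: (nth _ bl l).
split; first by split => //; [rewrite size_pseq | rewrite nth_pseq0 | rewrite nth_pseq_last].
split.
- move=> l hl; rewrite pairE //.
  have : 0 < count (same_edge (nth (a, a) bl l)) es.
    apply: leq_trans (hf _); rewrite -has_count; apply/hasP.
    by exists (nth (a, a) bl l); [rewrite mem_nth | exact: se_refl].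
  rewrite -has_count => /hasP [g gin sg].
  by exists (index g es); [rewrite index_mem | rewrite nth_index].
- move=> i hi.
  rewrite (eq_in_count (a2 := fun l => same_edge (nth (a, a) es i) (nth (a, a) bl l))); last first.
    by move=> l; rewrite mem_iota add0n => /andP[_ hl]; rewrite pairE // se_sym.
  rewrite -(count_map (nth (a, a) bl) (same_edge (nth (a, a) es i))).
  by rewrite -/(mkseq _ _) mkseq_nth.
- by move=> r hr; apply: pseq_edges.
Qed.

Lemma chain_of_nth (V : finType) (e : rel V) (z : V) (p : seq V) j k :
  (forall r, 2 * j <= r -> r < 2 * (j + k) + 1 -> e (nth z p r) (nth z p r.+1)) ->
  chain e (nth z p (2 * j))
    [seq (nth z p (2 * l + 1), nth z p (2 * l + 2)) | l <- iota j k]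
    (nth z p (2 * (j + k) + 1)).
Proof.
elim: k j => [|k IH] j h.
  rewrite addn0; have := h (2 * j); rewrite addn0 leqnn addn1 ltnSn.
  by move=> /(_ isT isT).
rewrite (_ : iota j k.+1 = j :: iota j.+1 k) // map_cons.
apply/andP; split.
  have h0 : e (nth z p (2 * j)) (nth z p (2 * j + 1)) by rewrite addn1; apply: h; lia.
  exact: h0.
have := IH j.+1 _.
rewrite (_ : 2 * j.+1 = 2 * j + 2); last by lia.
rewrite (_ : j.+1 + k = j + k.+1); last by lia.
move=> H; apply: H => r h1 h2; apply: h; lia.
Qed.

Lemma chain_of_even (V : finType) (e : rel V) (es : seq (V * V)) u v k p :
  even_conn e es u v k p ->
  exists bl, [/\ size bl = k, chain e u bl v & fits es bl].
Proof.
move=> [[hk sp p0 pk] [hex hcnt hed]].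
set f := fun l => (nth u p (2 * l + 1), nth u p (2 * l + 2)).
exists (map f (iota 0 k)); split.
- by rewrite size_map size_iota.
- have := @chain_of_nth V e u p 0 k.
  rewrite muln0 add0n p0 pk; apply => r _ hr; exact: hed.
- move=> q; case: (boolP (has (same_edge q) es)).
    case/hasP => g gin sg.
    rewrite (se_count _ sg) (se_count _ sg) -(nth_index (u, u) gin).
    rewrite count_map.
    rewrite (eq_count (a2 := fun l => same_edge (f l) (nth (u, u) es (index g es)))).
      by apply: hcnt; rewrite index_mem.
    by move=> l; rewrite se_sym.
  move=> hn; rewrite (_ : count _ _ = 0).
    by [].
  apply/eqP; rewrite -leqn0 leqNgt -has_count; apply/hasP => [[r]].
  case/mapP => l; rewrite mem_iota add0n => /andP[_ hl] -> sq.
  have [i hi si] := hex l hl.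
  move/hasP: hn; apply; exists (nth (u, u) es i); first by rewrite mem_nth.
  exact: se_trans sq si.
Qed.

Ltac slia := repeat match goal with H : _ |- _ => clear H end; lia.

Lemma noconn (V : finType) (e : rel V) es (Y : {set V + V}) u z bl :
  symmetric e -> all (fun q => e q.1 q.2) es ->
  ~ star_H e es Y u (inl z) -> inl z \notin Y -> chain e u bl z -> fits es bl -> False.
Proof.
move=> sym ees hst hz hc hf; have J := in_J_of_chain sym ees hc hf.
apply: hst; case: (eqVneq z u) => [->|zu]; first by left.
right; split; first by split.
by split => // uz; rewrite uz eqxx in zu.
Qed.

Lemma gap4 (V : finType) (e : rel V) u p1 q1 q2 :
  symmetric e -> gap_free e -> e u p1 -> e q1 q2 ->
  [|| e u q1, e u q2, e p1 q1 | e p1 q2].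
Proof.
move=> sym gf h1 h2.
case: (eqVneq u q1) => [E|n1]; first by apply/or4P; constructor 2; rewrite E.
case: (eqVneq u q2) => [E|n2]; first by apply/or4P; constructor 1; rewrite E sym.
case: (eqVneq p1 q1) => [E|n3]; first by apply/or4P; constructor 1; rewrite -E.
case: (eqVneq p1 q2) => [E|n4]; first by apply/or4P; constructor 2; rewrite -E.
exact: gf.
Qed.

Lemma count_split (V : finType) (P : pred (V * V)) (s : seq (V * V)) c x0 :
  c < size s ->
  count P s = count P (take c s) + P (nth x0 s c) + count P (drop c.+1 s).
Proof.
move=> hc; rewrite -{1}(cat_take_drop c s) (drop_nth x0 hc) count_cat.
by rewrite [count _ (_ :: _)]/= addnA.
Qed.

Lemma core (V : finType) (e : rel V) es (Y : {set V + V}) u v k p x y bq :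
  symmetric e -> gap_free e -> all (fun q => e q.1 q.2) es ->
  inl v \notin Y -> even_conn e es u v k p ->
  (forall u2 v2 k2 p2, inl u2 \notin Y -> inl v2 \notin Y ->
      even_conn e es u2 v2 k2 p2 -> k2 <= k) ->
  inl x \notin Y -> inl y \notin Y ->
  ~ star_H e es Y u (inl x) -> ~ star_H e es Y u (inl y) ->
  0 < size bq -> chain e x bq y -> fits es bq -> False.
Proof.
move=> sym gf ees hv hP hmax hx hy sx sy hsq cq fq.
have [bp [sbp cp fp]] := chain_of_even hP.
have hk : 0 < k by case: hP => [[]].
have NC := fun z bl (s : ~ star_H e es Y u (inl z)) (hz : inl z \notin Y) =>
  @noconn V e es Y u z bl sym ees s hz.
have LONG : forall z bl, inl z \notin Y -> chain e z bl v -> fits es bl -> k < size bl -> False.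
  move=> z bl hz hc hf hl.
  have hl1 : 0 < size bl by move: hl; slia.
  have := hmax z v (size bl) (pseq z bl v) hz hv (even_of_chain sym ees hl1 hc hf).
  by move: hl; slia.
set ovf := fun r => count (same_edge r) es < count (same_edge r) (bp ++ bq).
case: (boolP (has ovf bp)) => hov.
- set i := find ovf bp.
  have hi : i < size bp by rewrite -has_find.
  set t := nth (u, u) bp i.
  have ot : ovf t by exact: nth_find.
  have bef : forall j, j < i -> ~~ ovf (nth (u, u) bp j).
    by move=> j hj; rewrite (before_find _ hj).
  have : 0 < count (same_edge t) bq.
    by move: ot (fp t); rewrite /ovf count_cat; slia.
  rewrite -has_count => hst.
  set c := find (same_edge t) bq.
  have hc : c < size bq by rewrite -has_find.
  set sg := nth (u, u) bq c.
  have tsg : same_edge t sg by exact: nth_find.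
  have take0 : forall q, same_edge q t -> count (same_edge q) (take i bp) = 0.
    move=> q qt; apply/eqP; rewrite -leqn0 leqNgt -has_count.
    apply/(has_nthP (u, u)) => [[j hj]].
    have hji : j < i by move: hj; rewrite size_take hi.
    rewrite nth_take // => qj.
    have := bef j hji; rewrite /ovf.
    rewrite -(se_count es qj) -(se_count (bp ++ bq) qj) (se_count es qt) (se_count (bp ++ bq) qt).
    by move: ot; rewrite /ovf => ->.
  have K : forall q, count (same_edge q) (take i bp) + same_edge q t +
      count (same_edge q) (take c bq) + count (same_edge q) (drop c.+1 bq)
      <= count (same_edge q) es.
    move=> q; have := fq q; rewrite (count_split _ (u, u) hc) -/sg.
    case: (boolP (same_edge q t)) => qt.
      rewrite take0 // (se_trans qt tsg) /=; slia.
    case: (boolP (has (same_edge q) (take i bp))) => ht.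
      case/(has_nthP (u, u)): ht => j hj qj.
      have hji : j < i by move: hj; rewrite size_take hi.
      move: qj; rewrite nth_take // => qj.
      have := bef j hji; rewrite /ovf -leqNgt -(se_count es qj) -(se_count (bp ++ bq) qj).
      have eqs : count (same_edge q) bp =
          count (same_edge q) (take i bp) + count (same_edge q) (drop i bp).
        by rewrite -{1}(cat_take_drop i bp) count_cat.
      rewrite count_cat eqs (count_split _ (u, u) hc) -/sg; slia.
    move: ht; rewrite has_count -leqNgt leqn0 => /eqP ->; slia.
  move: cp; rewrite -(cat_take_drop i bp) (drop_nth (u, u) hi) -/t chain_cat => /andP[cp1 cp2].
  move: cq; rewrite -(cat_take_drop c bq) (drop_nth (u, u) hc) -/sg chain_cat => /andP[cq1 cq2].
  have [[e1 e2]|[e1 e2]] : (t.1 = sg.1 /\ t.2 = sg.2) \/ (t.1 = sg.2 /\ t.2 = sg.1).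
    by move: tsg; rewrite /same_edge => /orP [] /andP [/eqP -> /eqP ->]; [left|right].
  + apply: (NC y (take i bp ++ t :: drop c.+1 bq)) => //.
      by rewrite chain_cat cp1 e2.
    move=> q; have := K q; rewrite count_cat [count _ (_ :: _)]/=; slia.
  + apply: (NC x (take i bp ++ t :: revb (take c bq))) => //.
      by rewrite chain_cat cp1 /= e2 chain_rev.
    move=> q; have := K q; rewrite count_cat [count _ (_ :: _)]/= count_revb; slia.
- have fpq : fits es (bp ++ bq).
    move=> q; case: (boolP (has (same_edge q) bp)).
      case/hasP => r rin qr.
      have : ~~ ovf r by move/hasPn: hov; apply.
      by rewrite /ovf -leqNgt -(se_count es qr) -(se_count (bp ++ bq) qr).
    rewrite has_count -leqNgt leqn0 count_cat => /eqP ->; exact: fq.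
  clear hov ovf.
  case: bp sbp cp fp fpq => [|[p1 p2] bp'] sbp cp fp fpq; first by rewrite -sbp in hk.
  case: bq hsq cq fq fpq => [|[q1 q2] bq'] hsq cq fq fpq //.
  move: cp cq => /= /andP[up1 cp] /andP[xq1 cq].
  have hq12 : e q1 q2 by have := allP (fits_edges sym ees fq) (q1, q2) (mem_head _ _).
  have := gap4 sym gf up1 hq12; case/or4P.
  + move=> uq1; apply: (NC y ((q1, q2) :: bq')) => //=.
    by rewrite uq1.
  + move=> uq2; apply: (NC x [:: (q2, q1)]) => //=.
      by rewrite uq2 sym.
    move=> q; have := fq q; rewrite /= (_ : same_edge q (q2, q1) = same_edge q (q1, q2)).
      slia.
    by rewrite /same_edge /= orbC.
  + move=> pq1; apply: (LONG y (revb bq' ++ (q2, q1) :: (p1, p2) :: bp')) => //.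
    * by rewrite chain_cat (chain_rev sym cq) /= sym pq1.
    * move=> q; have := fpq q; rewrite !count_cat /= count_revb.
      rewrite (_ : same_edge q (q2, q1) = same_edge q (q1, q2)); first slia.
      by rewrite /same_edge /= orbC.
    * rewrite size_cat -sbp /=; slia.
  + move=> pq2; apply: (LONG x ((q1, q2) :: (p1, p2) :: bp')) => //.
    * by rewrite /= xq1 sym pq2.
    * move=> q; have := fpq q; rewrite !count_cat /=; slia.
    * by rewrite /= -sbp.
Qed.

Theorem lemma6p18 (V : finType) (e : rel V) (es : seq (V * V))
    (Y : {set V + V}) (u v : V) (k : nat) (p : seq V) :
  symmetric e -> irreflexive e -> gap_free e ->
  1 <= size es -> all (fun q => e q.1 q.2) es ->
  (forall w, w \in Y -> Gp_vert e es w) ->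
  inl u \notin Y -> inl v \notin Y ->
  even_conn e es u v k p ->
  (forall u2 v2 k2 p2, inl u2 \notin Y -> inl v2 \notin Y ->
      even_conn e es u2 v2 k2 p2 -> k2 <= k) ->
  forall w1 w2 : V + V,
    H_vert e es Y w1 -> ~ star_H e es Y u w1 ->
    H_vert e es Y w2 -> ~ star_H e es Y u w2 ->
    (Gp_edge e es w1 w2 <-> exists x y, [/\ w1 = inl x, w2 = inl y & e x y]).
Proof.
move=> sym irr gf hs ees hY hu hv hP hmax w1 w2 h1 n1 h2 n2; split.
- case: w1 h1 n1 => [x|x] [_ hx] n1; case: w2 h2 n2 => [y|y] [_ hy] n2 //= hE.
  + case: hE => xy J.
    have [[|c bl] [hc hf]] := chain_of_in_J sym J.
      by exists x, y.
    exfalso; exact: (core sym gf ees hv hP hmax hx hy n1 n2 _ hc hf).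
  + case: hE => <- J.
    have [[|c bl] [hc hf]] := chain_of_in_J sym J.
      by rewrite /= irr in hc.
    exfalso; exact: (core sym gf ees hv hP hmax hx hx n1 n1 _ hc hf).
  + case: hE => xy J; subst y.
    have [[|c bl] [hc hf]] := chain_of_in_J sym J.
      by rewrite /= irr in hc.
    exfalso; exact: (core sym gf ees hv hP hmax hy hy n2 n2 _ hc hf).
- case=> x [y [-> -> exy]] /=; split.
    by move=> E; rewrite E irr in exy.
  by apply: (in_J_of_chain (bl := [::]) sym ees) => //= q.
Qed.
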